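(* Let $f(i)=\log_2(1+i)$ for $i\in\mathbb{N}$ and let $(n_k)_{k\ge1}$ be an increasing sequence of positive integers with $\sum_{k=1}^\infty \frac{1}{f(n_k)}<\frac1{10}$. Then there exists a $1$-unconditional norm $\|\cdot\|$ on $c_{00}$ which satisfies, for every $x\in c_{00}$, the implicit equation $$\|x\|=\max\Big\{\|x\|_{c_0},\Big(\sum_{k=1}^\infty \|x\|_{n_k}^2\Big)^{1/2}\Big\},\qquad\text{where}\qquad \|x\|_k=\max_{E_1<\cdots<E_k}\frac{1}{f(k)}\sum_{i=1}^k\|E_ix\|,$$ the maximum being over all $k$-tuples of subsets $E_1<\cdots<E_k$ of $\mathbb{N}$.
   Context: $c_{00}$ is the space of finitely supported real sequences on $\mathbb{N}$, with unit vector basis $(e_i)$. For $E,F\subseteq\mathbb{N}$, $E<F$ means $\max E<\min F$. For $x\in c_{00}$ and $E\subseteq\mathbb{N}$, $Ex$ denotes the restriction: $Ex(i)=x(i)$ if $i\in E$ and $0$ otherwise. $\|x\|_{c_0}=\max_i|x(i)|$. *)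

(* Defs.v *)
From Stdlib Require Import Reals Lra List.
From Coquelicot Require Import Coquelicot.
Open Scope R_scope.

Definition c00 (x : nat -> R) : Prop :=
  exists m : nat, forall i : nat, (m <= i)%nat -> x i = 0.

Definition flog (i : nat) : R := ln (1 + INR i) / ln 2.

(* Subsets of N as characteristic functions; E x = restriction. *)
Definition restr (E : nat -> bool) (x : nat -> R) : nat -> R :=
  fun j => if E j then x j else 0.

Definition set_lt (E F : nat -> bool) : Prop :=
  forall a b : nat, E a = true -> F b = true -> (a < b)%nat.

Definition admissible (k : nat) (E : nat -> nat -> bool) : Prop :=
  (forall i, (i < k)%nat -> exists a, E i a = true) /\
  (forall i, (S i < k)%nat -> set_lt (E i) (E (S i))).

Definition normk (N : (nat -> R) -> R) (k : nat) (x : nat -> R) : R :=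
  real (Lub_Rbar (fun r => exists E, admissible k E /\
     r = / flog k * fold_right Rplus 0 (map (fun i => N (restr (E i) x)) (seq 0 k)))).

Definition c0norm (x : nat -> R) : R :=
  real (Lub_Rbar (fun r => exists i, r = Rabs (x i))).

Definition is_norm_c00 (N : (nat -> R) -> R) : Prop :=
  (forall x, c00 x -> N x = 0 -> forall i, x i = 0) /\
  (forall a x, c00 x -> N (fun i => a * x i) = Rabs a * N x) /\
  (forall x y, c00 x -> c00 y -> N (fun i => x i + y i) <= N x + N y).

Definition one_unconditional (N : (nat -> R) -> R) : Prop :=
  forall (eps : nat -> R) x, c00 x -> (forall i, eps i = 1 \/ eps i = -1) ->
    N (fun i => eps i * x i) = N x.

(* Main.v *)
Require Import Defs.
From Stdlib Require Import Reals List.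
From Coquelicot Require Import Coquelicot.
From Stdlib Require Import Lra Lia FunctionalExtensionality.
Open Scope R_scope.

Definition sup {T : Type} (P : T -> Prop) (g : T -> R) : R :=
  real (Lub_Rbar (fun r => exists t, P t /\ r = g t)).

Lemma sup_fin {T} (P : T -> Prop) g B :
  (exists t, P t) -> (forall t, P t -> g t <= B) ->
  Lub_Rbar (fun r => exists t, P t /\ r = g t) = Finite (sup P g).
Proof.
  intros [t0 Ht0] HB. unfold sup.
  destruct (Lub_Rbar_correct (fun r => exists t, P t /\ r = g t)) as [H1 H2].
  destruct (Lub_Rbar (fun r => exists t, P t /\ r = g t)) as [l| |] eqn:E.
  - reflexivity.
  - exfalso. specialize (H2 (Finite B)). simpl in H2. apply H2.
    intros r [t [Pt ->]]. simpl. auto.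
  - exfalso. specialize (H1 (g t0) (ex_intro _ t0 (conj Ht0 eq_refl))). simpl in H1. auto.
Qed.

Lemma sup_ub {T} (P : T -> Prop) g B t :
  (forall t, P t -> g t <= B) -> P t -> g t <= sup P g.
Proof.
  intros HB Pt.
  pose proof (sup_fin P g B (ex_intro _ t Pt) HB) as E.
  destruct (Lub_Rbar_correct (fun r => exists t, P t /\ r = g t)) as [H1 H2].
  rewrite E in H1. apply (H1 (g t)). eauto.
Qed.

Lemma sup_le {T} (P : T -> Prop) g B :
  (exists t, P t) -> (forall t, P t -> g t <= B) -> sup P g <= B.
Proof.
  intros Hne HB.
  pose proof (sup_fin P g B Hne HB) as E.
  destruct (Lub_Rbar_correct (fun r => exists t, P t /\ r = g t)) as [H1 H2].
  rewrite E in H2. apply (H2 (Finite B)).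
  intros r [t [Pt ->]]. simpl. auto.
Qed.

Lemma sup_scal {T} (P : T -> Prop) g h c B :
  (exists t, P t) -> (forall t, P t -> g t <= B) -> 0 <= c ->
  (forall t, P t -> h t = c * g t) -> sup P h = c * sup P g.
Proof.
  intros Hne HB Hc Hh.
  assert (Hub : forall t, P t -> h t <= c * sup P g).
  { intros t Pt. rewrite Hh by auto. apply Rmult_le_compat_l; auto.
    eapply sup_ub; eauto. }
  destruct (Rle_lt_or_eq_dec 0 c Hc) as [Hc'|Hc'].
  - apply Rle_antisym.
    + apply sup_le; auto.
    + assert (sup P g <= sup P h / c).
      { apply sup_le; auto. intros t Pt.
        assert (h t <= sup P h) by (eapply sup_ub; eauto).
        rewrite Hh in H by auto. apply Rmult_le_reg_l with c; auto.
        field_simplify; lra. }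
      apply Rmult_le_reg_l with (/ c). apply Rinv_0_lt_compat; auto.
      replace (/c * (c * sup P g)) with (sup P g) by (field; lra).
      rewrite Rmult_comm. exact H.
  - subst c. rewrite Rmult_0_l. destruct Hne as [t0 Ht0].
    apply Rle_antisym.
    + apply sup_le; eauto. intros t Pt. rewrite Hh; auto; lra.
    + replace 0 with (h t0) by (rewrite Hh; auto; lra).
      eapply sup_ub; eauto.
Qed.

Definition fsum (k : nat) (f : nat -> R) : R := fold_right Rplus 0 (map f (seq 0 k)).

Lemma fold_plus_acc (l : list R) a : fold_right Rplus a l = fold_right Rplus 0 l + a.
Proof. induction l; simpl; try rewrite IHl; lra. Qed.

Lemma fsum_0 f : fsum 0 f = 0. Proof. reflexivity. Qed.
Lemma fsum_S k f : fsum (S k) f = fsum k f + f k.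
Proof.
  unfold fsum. rewrite seq_S, map_app, fold_right_app. simpl.
  rewrite fold_plus_acc. lra.
Qed.

Lemma fsum_le k f g : (forall i, (i < k)%nat -> f i <= g i) -> fsum k f <= fsum k g.
Proof.
  induction k; intros H. rewrite !fsum_0; lra.
  rewrite !fsum_S. apply Rplus_le_compat; auto.
Qed.

Lemma fsum_plus k f g : fsum k (fun i => f i + g i) = fsum k f + fsum k g.
Proof. induction k. rewrite !fsum_0; lra. rewrite !fsum_S, IHk; lra. Qed.

Lemma fsum_scal k c f : fsum k (fun i => c * f i) = c * fsum k f.
Proof. induction k. rewrite !fsum_0; lra. rewrite !fsum_S, IHk; lra. Qed.

Lemma fsum_ext k f g : (forall i, (i < k)%nat -> f i = g i) -> fsum k f = fsum k g.
Proof.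
  induction k; intros H. reflexivity.
  rewrite !fsum_S. rewrite IHk by auto. rewrite H; auto.
Qed.

Lemma fsum_nonneg k f : (forall i, (i < k)%nat -> 0 <= f i) -> 0 <= fsum k f.
Proof.
  intros H. replace 0 with (fsum k (fun _ => 0)). apply fsum_le; auto.
  induction k. reflexivity. rewrite fsum_S, IHk; auto. lra.
Qed.

Lemma fsum_zero k f : (forall i, (i < k)%nat -> f i = 0) -> fsum k f = 0.
Proof.
  induction k; intros H. reflexivity. rewrite fsum_S, IHk, H; auto. lra.
Qed.

Lemma fsum_swap k M (g : nat -> nat -> R) :
  fsum k (fun i => fsum M (fun j => g i j)) = fsum M (fun j => fsum k (fun i => g i j)).
Proof.
  induction k. rewrite fsum_0. symmetry. apply fsum_zero. reflexivity.
  rewrite fsum_S, IHk, <- fsum_plus. apply fsum_ext. intros. rewrite fsum_S. reflexivity.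
Qed.


Definition suppb (M : nat) (x : nat -> R) := forall j, (M <= j)%nat -> x j = 0.
Definition l1 M (x : nat -> R) := fsum M (fun j => Rabs (x j)).

Lemma suppb_c00 M x : suppb M x -> c00 x.
Proof. intros H. exists M. exact H. Qed.

Lemma suppb_restr M E x : suppb M x -> suppb M (restr E x).
Proof. intros H j Hj. unfold restr. destruct (E j); auto. Qed.

Lemma c00_restr E x : c00 x -> c00 (restr E x).
Proof. intros [M H]. exists M. apply suppb_restr. exact H. Qed.

Lemma l1_nonneg M x : 0 <= l1 M x.
Proof. apply fsum_nonneg. intros. apply Rabs_pos. Qed.

Lemma adm_lt k E i j a b : admissible k E -> (i < j)%nat -> (j < k)%nat ->
  E i a = true -> E j b = true -> (a < b)%nat.
Proof.
  intros [Hne Hlt]. revert b. induction j; intros b Hij Hjk Ha Hb. lia.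
  destruct (Nat.eq_dec i j) as [->|Hne'].
  - apply (Hlt j Hjk a b Ha Hb).
  - destruct (Hne j ltac:(lia)) as [c Hc].
    specialize (IHj c ltac:(lia) ltac:(lia) Ha Hc).
    specialize (Hlt j Hjk c b Hc Hb). lia.
Qed.

Lemma disj_sum k E a r : admissible k E -> 0 <= r ->
  fsum k (fun i => if E i a then r else 0) <= r.
Proof.
  intros Hadm Hr.
  assert (forall m, (m <= k)%nat -> fsum m (fun i => if E i a then r else 0) <= r).
  { induction m; intros Hm. rewrite fsum_0. lra.
    rewrite fsum_S. destruct (E m a) eqn:Ema.
    - rewrite fsum_zero. lra. intros i Hi. destruct (E i a) eqn:Eia; auto.
      pose proof (adm_lt k E i m a a Hadm Hi ltac:(lia) Eia Ema). lia.
    - specialize (IHm ltac:(lia)). lra. }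
  apply H. lia.
Qed.

Lemma l1_restr_sum k E M x : admissible k E ->
  fsum k (fun i => l1 M (restr (E i) x)) <= l1 M x.
Proof.
  intros Hadm. unfold l1. rewrite fsum_swap. apply fsum_le. intros j _.
  replace (fsum k (fun i => Rabs (restr (E i) x j)))
    with (fsum k (fun i => if E i j then Rabs (x j) else 0)).
  apply disj_sum; auto. apply Rabs_pos.
  apply fsum_ext. intros i _. unfold restr. destruct (E i j); auto. rewrite Rabs_R0; auto.
Qed.

Definition Bd (N : (nat -> R) -> R) :=
  (forall x, c00 x -> 0 <= N x) /\ (forall M x, suppb M x -> N x <= l1 M x).

Lemma flog_ge1 k : (1 <= k)%nat -> 1 <= flog k.
Proof.
  intros Hk. unfold flog.
  assert (H2 : 0 < ln 2). { rewrite <- ln_1. apply ln_increasing; lra. }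
  apply (Rmult_le_reg_r (ln 2)); auto. unfold Rdiv. rewrite Rmult_assoc, Rinv_l by lra.
  rewrite Rmult_1_r, Rmult_1_l. apply ln_le. lra.
  apply le_INR in Hk. simpl in Hk. lra.
Qed.

Definition Aval (N : (nat -> R) -> R) k x (E : nat -> nat -> bool) :=
  / flog k * fsum k (fun i => N (restr (E i) x)).

Lemma normk_sup N k x : normk N k x = sup (admissible k) (Aval N k x).
Proof. reflexivity. Qed.

Lemma adm_ex k : exists E, admissible k E.
Proof.
  exists (fun i a => Nat.eqb a i). split.
  - intros i _. exists i. apply Nat.eqb_refl.
  - intros i _ a b Ha Hb. apply Nat.eqb_eq in Ha. apply Nat.eqb_eq in Hb. lia.
Qed.

Lemma Aval_bounds N k M x E : Bd N -> (1 <= k)%nat -> suppb M x -> admissible k E ->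
  0 <= Aval N k x E <= l1 M x / flog k.
Proof.
  intros [HN0 HN1] Hk Hx Hadm. pose proof (flog_ge1 k Hk).
  assert (0 < / flog k) by (apply Rinv_0_lt_compat; lra).
  unfold Aval. split.
  - apply Rmult_le_pos. lra. apply fsum_nonneg. intros. apply HN0.
    apply c00_restr. eapply suppb_c00; eauto.
  - unfold Rdiv. rewrite Rmult_comm. apply Rmult_le_compat_r. lra.
    eapply Rle_trans. 2: apply (l1_restr_sum k E M x Hadm).
    apply fsum_le. intros. apply HN1. apply suppb_restr; auto.
Qed.

Lemma normk_ub N k M x E : Bd N -> (1 <= k)%nat -> suppb M x -> admissible k E ->
  Aval N k x E <= normk N k x.
Proof.
  intros. rewrite normk_sup. apply sup_ub with (B := l1 M x / flog k); auto.
  intros. eapply Aval_bounds; eauto.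
Qed.

Lemma normk_bounds N k M x : Bd N -> (1 <= k)%nat -> suppb M x ->
  0 <= normk N k x <= l1 M x / flog k.
Proof.
  intros. destruct (adm_ex k) as [E HE]. split.
  - eapply Rle_trans. 2: eapply normk_ub; eauto. eapply Aval_bounds; eauto.
  - rewrite normk_sup. apply sup_le. eauto. intros. eapply Aval_bounds; eauto.
Qed.

Lemma normk_mono N1 N2 k M x : Bd N2 -> (1 <= k)%nat -> suppb M x ->
  (forall y, c00 y -> N1 y <= N2 y) -> normk N1 k x <= normk N2 k x.
Proof.
  intros HB Hk Hx Hle. rewrite (normk_sup N1). apply sup_le. apply adm_ex.
  intros E HE. eapply Rle_trans. 2: eapply normk_ub; eauto.
  unfold Aval. apply Rmult_le_compat_l.
  pose proof (flog_ge1 k Hk). left. apply Rinv_0_lt_compat; lra.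
  apply fsum_le. intros. apply Hle. apply c00_restr. eapply suppb_c00; eauto.
Qed.


Lemma ex_series_R_le (a b : nat -> R) : (forall k, 0 <= a k <= b k) -> ex_series b -> ex_series a.
Proof.
  intros H Hb. apply (ex_series_le a b); auto. intros k.
  change (norm (a k)) with (Rabs (a k)). rewrite Rabs_pos_eq; apply H.
Qed.

Lemma ex_series_R_scal c (a : nat -> R) : ex_series a -> ex_series (fun k => c * a k).
Proof. intros H. apply (ex_series_scal_l c a H). Qed.

Lemma ex_series_R_plus (a b : nat -> R) : ex_series a -> ex_series b -> ex_series (fun k => a k + b k).
Proof. intros H1 H2. apply (ex_series_plus a b H1 H2). Qed.



Lemma Series_ge0 (a : nat -> R) : (forall k, 0 <= a k) -> ex_series a -> 0 <= Series a.
Proof.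
  intros H E.
  assert (Z : Series (fun _ => 0) = 0).
  { rewrite (Series_ext (fun _ => 0) (fun k => 0 * a k)) by (intros; ring).
    rewrite Series_scal_l. ring. }
  rewrite <- Z. apply Series_le; auto. intros; split; [lra|auto].
Qed.

Lemma minkowski (a b c : nat -> R) :
  (forall k, 0 <= a k <= b k + c k) -> (forall k, 0 <= b k) -> (forall k, 0 <= c k) ->
  ex_series (fun k => b k ^ 2) -> ex_series (fun k => c k ^ 2) ->
  sqrt (Series (fun k => a k ^ 2)) <= sqrt (Series (fun k => b k ^ 2)) + sqrt (Series (fun k => c k ^ 2)).
Proof.
  intros Ha Hb Hc Eb Ec.
  set (B := Series (fun k => b k ^ 2)). set (C := Series (fun k => c k ^ 2)).
  assert (HB : 0 <= B). { apply Series_ge0; auto. intros; apply pow2_ge_0. }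
  assert (HC : 0 <= C). { apply Series_ge0; auto. intros; apply pow2_ge_0. }
  set (u := sqrt B). set (v := sqrt C).
  assert (Hu : 0 <= u) by apply sqrt_pos. assert (Hv : 0 <= v) by apply sqrt_pos.
  assert (HuB : u * u = B) by (apply sqrt_sqrt; auto).
  assert (HvC : v * v = C) by (apply sqrt_sqrt; auto).
  assert (Key : forall t, 0 < t -> Series (fun k => a k ^ 2) <= (1 + t) * B + (1 + / t) * C).
  { intros t Ht.
    assert (E1 : ex_series (fun k => (1 + t) * b k ^ 2 + (1 + / t) * c k ^ 2)).
    { apply ex_series_R_plus; apply ex_series_R_scal; auto. }
    eapply Rle_trans. apply Series_le. 2: exact E1.
    - intros k. split. apply pow2_ge_0. destruct (Ha k) as [Ha0 Ha1].
      assert (a k ^ 2 <= (b k + c k) ^ 2) by (apply pow_incr; auto).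
      assert ((b k + c k) ^ 2 <= (1 + t) * b k ^ 2 + (1 + / t) * c k ^ 2).
      { assert (Hti : t * / t = 1) by (field; lra).
        assert (0 < / t) by (apply Rinv_0_lt_compat; auto).
        assert (0 <= / t * (t * b k - c k) ^ 2) by (apply Rmult_le_pos; [lra| apply pow2_ge_0]).
        replace ((1 + t) * b k ^ 2 + (1 + / t) * c k ^ 2) with
          ((b k + c k) ^ 2 + / t * (t * b k - c k) ^ 2) by (field; lra). lra. }
      lra.
    - rewrite Series_plus by (apply ex_series_R_scal; auto).
      rewrite !Series_scal_l. fold B C. lra. }
  assert (Hall : forall e, 0 < e -> sqrt (Series (fun k => a k ^ 2)) <= u + v + 2 * e).
  { intros e He. set (t := (v + e) / (u + e)).
    assert (Ht : 0 < t) by (unfold t; apply Rdiv_lt_0_compat; lra).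
    specialize (Key t Ht).
    assert (Hbound : (1 + t) * B + (1 + / t) * C <= (u + v + 2 * e) ^ 2).
    { replace ((1 + t) * B + (1 + / t) * C) with
        ((u + v + 2 * e) * (B / (u + e) + C / (v + e))) by (unfold t; field; lra).
      assert (B / (u + e) <= u).
      { apply (Rmult_le_reg_r (u + e)). lra. unfold Rdiv. rewrite Rmult_assoc, Rinv_l by lra. nra. }
      assert (C / (v + e) <= v).
      { apply (Rmult_le_reg_r (v + e)). lra. unfold Rdiv. rewrite Rmult_assoc, Rinv_l by lra. nra. }
      assert (0 <= B / (u + e)) by (apply Rdiv_le_0_compat; lra).
      assert (0 <= C / (v + e)) by (apply Rdiv_le_0_compat; lra).
      nra. }
    rewrite <- (sqrt_pow2 (u + v + 2 * e)) by lra. apply sqrt_le_1_alt. lra. }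
  destruct (Rle_or_lt (sqrt (Series (fun k => a k ^ 2))) (u + v)) as [H|H]; auto.
  specialize (Hall ((sqrt (Series (fun k => a k ^ 2)) - (u + v)) / 4) ltac:(lra)). lra.
Qed.


Lemma c0norm_sup x : c0norm x = sup (fun _ : nat => True) (fun i => Rabs (x i)).
Proof.
  unfold c0norm, sup. f_equal. apply Lub_Rbar_eqset. intros r; split.
  - intros [i Hi]. exists i. auto.
  - intros [i [_ Hi]]. exists i. auto.
Qed.

Lemma fsum_term M f i : (i < M)%nat -> (forall j, 0 <= f j) -> f i <= fsum M f.
Proof.
  induction M; intros Hi Hf. lia. rewrite fsum_S.
  destruct (Nat.eq_dec i M) as [->|].
  - pose proof (fsum_nonneg M f (fun j _ => Hf j)). lra.
  - specialize (IHM ltac:(lia) Hf). specialize (Hf M). lra.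
Qed.

Lemma abs_le_l1 M x i : suppb M x -> Rabs (x i) <= l1 M x.
Proof.
  intros H. destruct (Nat.lt_ge_cases i M).
  - apply (fsum_term M (fun j => Rabs (x j))); auto. intros; apply Rabs_pos.
  - rewrite H by auto. rewrite Rabs_R0. apply l1_nonneg.
Qed.

Lemma c0_ub M x i : suppb M x -> Rabs (x i) <= c0norm x.
Proof.
  intros H. rewrite c0norm_sup. apply (sup_ub (fun _ : nat => True) (fun i => Rabs (x i)) (l1 M x) i); auto.
  intros; apply abs_le_l1; auto.
Qed.

Lemma c0_bounds M x : suppb M x -> 0 <= c0norm x <= l1 M x.
Proof.
  intros H. split.
  - eapply Rle_trans. 2: apply (c0_ub M x 0 H). apply Rabs_pos.
  - rewrite c0norm_sup. apply sup_le. exists 0%nat; auto. intros; apply abs_le_l1; auto.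
Qed.

Lemma suppb_mono M M' x : (M <= M')%nat -> suppb M x -> suppb M' x.
Proof. intros H1 H2 j Hj. apply H2. lia. Qed.

Section Main.
Variable n : nat -> nat.
Variable s : R.
Hypothesis Hn1 : forall k, (1 <= n k)%nat.
Hypothesis Hs : is_series (fun k => / flog (n k)) s.
Hypothesis Hs1 : s <= 1.

Definition Phi (N : (nat -> R) -> R) (x : nat -> R) : R :=
  Rmax (c0norm x) (sqrt (Series (fun k => normk N (n k) x ^ 2))).

Lemma ser_facts N M x : Bd N -> suppb M x ->
  ex_series (fun k => normk N (n k) x ^ 2) /\
  Series (fun k => normk N (n k) x ^ 2) <= l1 M x ^ 2 * s.
Proof.
  intros HB Hx.
  assert (Hle : forall k, 0 <= normk N (n k) x ^ 2 <= l1 M x ^ 2 * / flog (n k)).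
  { intros k. split. apply pow2_ge_0.
    destruct (normk_bounds N (n k) M x HB (Hn1 k) Hx) as [H0 H1].
    pose proof (flog_ge1 _ (Hn1 k)).
    assert (0 < / flog (n k) <= 1).
    { split. apply Rinv_0_lt_compat; lra. rewrite <- Rinv_1. apply Rinv_le_contravar; lra. }
    pose proof (l1_nonneg M x).
    assert (normk N (n k) x ^ 2 <= (l1 M x / flog (n k)) ^ 2) by (apply pow_incr; auto).
    unfold Rdiv in H4. 
    assert (0 <= l1 M x ^ 2) by apply pow2_ge_0.
    nra. }
  assert (Eb : ex_series (fun k => l1 M x ^ 2 * / flog (n k))).
  { apply ex_series_R_scal. exists s. exact Hs. }
  split.
  - exact (ex_series_R_le _ _ Hle Eb).
  - eapply Rle_trans. apply (Series_le _ _ Hle Eb).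
    rewrite Series_scal_l. rewrite (is_series_unique _ s Hs). lra.
Qed.

Lemma Phi_Bd N : Bd N -> Bd (Phi N).
Proof.
  intros HB. split.
  - intros x [M Hx]. unfold Phi. eapply Rle_trans. 2: apply Rmax_l.
    apply (c0_bounds M x Hx).
  - intros M x Hx. unfold Phi. apply Rmax_lub. apply (c0_bounds M x Hx).
    destruct (ser_facts N M x HB Hx) as [_ H].
    pose proof (l1_nonneg M x).
    rewrite <- (sqrt_pow2 (l1 M x)) by auto. apply sqrt_le_1_alt.
    assert (0 <= l1 M x ^ 2) by apply pow2_ge_0.
    assert (0 <= s).
    { rewrite <- (is_series_unique _ s Hs). apply (Series_ge0 (fun k => / flog (n k))).
      intros k. pose proof (flog_ge1 _ (Hn1 k)). left; apply Rinv_0_lt_compat; lra.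
      exists s; auto. }
    nra.
Qed.

Lemma Phi_mono N1 N2 x : Bd N1 -> Bd N2 -> (forall y, c00 y -> N1 y <= N2 y) -> c00 x ->
  Phi N1 x <= Phi N2 x.
Proof.
  intros HB1 HB2 Hle [M Hx]. unfold Phi.
  apply Rmax_lub. apply Rmax_l. eapply Rle_trans. 2: apply Rmax_r.
  apply sqrt_le_1_alt. apply Series_le. 2: apply (ser_facts N2 M x HB2 Hx).
  intros k. split. apply pow2_ge_0. apply pow_incr. split.
  apply (normk_bounds N1 (n k) M x HB1 (Hn1 k) Hx).
  apply (normk_mono N1 N2 (n k) M x HB2 (Hn1 k) Hx Hle).
Qed.


Definition Hom (N : (nat -> R) -> R) := forall a x, c00 x -> N (fun i => a * x i) = Rabs a * N x.
Definition Tri (N : (nat -> R) -> R) := forall x y, c00 x -> c00 y -> N (fun i => x i + y i) <= N x + N y.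

Lemma sup_ext {T} (P : T -> Prop) g h : (forall t, P t -> g t = h t) -> sup P g = sup P h.
Proof.
  intros H. unfold sup. f_equal. apply Lub_Rbar_eqset. intros r; split.
  - intros [t [Pt ->]]. exists t. split; auto.
  - intros [t [Pt ->]]. exists t. split; auto. symmetry; auto.
Qed.

Lemma Phi_hom N : Bd N -> Hom N -> Hom (Phi N).
Proof.
  intros HB HN a x [M Hx].
  assert (Hax : suppb M (fun i => a * x i)). { intros j Hj. rewrite Hx by auto. ring. }
  assert (Hc0 : c0norm (fun i => a * x i) = Rabs a * c0norm x).
  { rewrite !c0norm_sup. apply sup_scal with (B := l1 M x).
    exists 0%nat; auto. intros; apply abs_le_l1; auto. apply Rabs_pos.
    intros; apply Rabs_mult. }
  assert (Hk : forall k, (1 <= k)%nat -> normk N k (fun i => a * x i) = Rabs a * normk N k x).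
  { intros k Hk. rewrite !normk_sup. apply sup_scal with (B := l1 M x / flog k).
    apply adm_ex. intros; eapply Aval_bounds; eauto. apply Rabs_pos.
    intros E HE. unfold Aval.
    rewrite (fsum_ext k _ (fun i => Rabs a * N (restr (E i) x))).
    rewrite fsum_scal. ring.
    intros i _.
    replace (restr (E i) (fun j => a * x j)) with (fun j => a * restr (E i) x j).
    apply HN. apply c00_restr. exists M; auto.
    apply functional_extensionality. intros j. unfold restr. destruct (E i j); ring. }
  unfold Phi. rewrite Hc0.
  rewrite (Series_ext _ (fun k => Rabs a ^ 2 * normk N (n k) x ^ 2)).
  2: { intros k. rewrite Hk by auto. ring. }
  rewrite Series_scal_l, sqrt_mult_alt by apply pow2_ge_0.
  rewrite sqrt_pow2 by apply Rabs_pos. apply RmaxRmult. apply Rabs_pos.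
Qed.

Lemma Phi_tri N : Bd N -> Tri N -> Tri (Phi N).
Proof.
  intros HB HN x y [Mx Hx] [My Hy].
  set (M := Nat.max Mx My).
  assert (Hx' : suppb M x) by (apply (suppb_mono Mx); [lia|auto]).
  assert (Hy' : suppb M y) by (apply (suppb_mono My); [lia|auto]).
  assert (Hxy : suppb M (fun i => x i + y i)). { intros j Hj. rewrite Hx', Hy' by auto. ring. }
  assert (Hc0 : c0norm (fun i => x i + y i) <= c0norm x + c0norm y).
  { rewrite (c0norm_sup (fun i => x i + y i)). apply sup_le. exists 0%nat; auto.
    intros i _. eapply Rle_trans. apply Rabs_triang.
    apply Rplus_le_compat; eapply c0_ub; eauto. }
  assert (Hk : forall k, (1 <= k)%nat -> normk N k (fun i => x i + y i) <= normk N k x + normk N k y).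
  { intros k Hk. rewrite (normk_sup N k (fun i => x i + y i)). apply sup_le. apply adm_ex.
    intros E HE. eapply Rle_trans.
    2: apply Rplus_le_compat; eapply normk_ub; eauto.
    unfold Aval. rewrite <- Rmult_plus_distr_l, <- fsum_plus.
    apply Rmult_le_compat_l. pose proof (flog_ge1 k Hk). left; apply Rinv_0_lt_compat; lra.
    apply fsum_le. intros i _.
    replace (restr (E i) (fun j => x j + y j)) with (fun j => restr (E i) x j + restr (E i) y j).
    apply HN; apply c00_restr; eexists; eauto.
    apply functional_extensionality. intros j. unfold restr. destruct (E i j); ring. }
  unfold Phi.
  assert (Hm : sqrt (Series (fun k => normk N (n k) (fun i => x i + y i) ^ 2)) <=
     sqrt (Series (fun k => normk N (n k) x ^ 2)) + sqrt (Series (fun k => normk N (n k) y ^ 2))).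
  { apply (minkowski (fun k => normk N (n k) (fun i => x i + y i))
                     (fun k => normk N (n k) x) (fun k => normk N (n k) y)).
    - intros k. split. apply (normk_bounds N (n k) M _ HB (Hn1 k) Hxy). apply Hk; auto.
    - intros k. apply (normk_bounds N (n k) M _ HB (Hn1 k) Hx').
    - intros k. apply (normk_bounds N (n k) M _ HB (Hn1 k) Hy').
    - apply (ser_facts N M x HB Hx').
    - apply (ser_facts N M y HB Hy'). }
  apply Rmax_lub.
  - eapply Rle_trans. apply Hc0. apply Rplus_le_compat; apply Rmax_l.
  - eapply Rle_trans. apply Hm. apply Rplus_le_compat; apply Rmax_r.
Qed.

Lemma Phi_unc N : one_unconditional N -> one_unconditional (Phi N).
Proof.
  intros HN eps x [M Hx] Heps.
  assert (Hc0 : c0norm (fun i => eps i * x i) = c0norm x).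
  { unfold c0norm. f_equal. apply Lub_Rbar_eqset. intros r.
    assert (forall i, Rabs (eps i * x i) = Rabs (x i)).
    { intros i. rewrite Rabs_mult. destruct (Heps i) as [-> | ->];
      rewrite ?Rabs_R1, ?Rabs_m1; ring. }
    split; intros [i Hi]; exists i; rewrite Hi; auto. }
  assert (Hk : forall k, normk N k (fun i => eps i * x i) = normk N k x).
  { intros k. rewrite !normk_sup. apply sup_ext. intros E HE. unfold Aval. f_equal.
    apply fsum_ext. intros i _.
    replace (restr (E i) (fun j => eps j * x j)) with (fun j => eps j * restr (E i) x j).
    apply HN; auto. apply c00_restr. exists M; auto.
    apply functional_extensionality. intros j. unfold restr. destruct (E i j); ring. }
  unfold Phi. rewrite Hc0. f_equal. f_equal. apply Series_ext. intros k. rewrite Hk. reflexivity.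
Qed.


Definition Cls (N : (nat -> R) -> R) :=
  Bd N /\ Hom N /\ Tri N /\ one_unconditional N /\ (forall x, c00 x -> N x <= Phi N x).

Definition G (x : nat -> R) : R := sup Cls (fun N => N x).

Lemma Cls_zero : Cls (fun _ => 0).
Proof.
  assert (HB : Bd (fun _ => 0)). { split. intros; lra. intros; apply l1_nonneg. }
  split; [|split; [|split; [|split]]]; auto.
  - intros a x _. ring.
  - intros x y _ _. lra.
  - intros eps x _ _. reflexivity.
  - intros x Hx. apply (Phi_Bd _ HB). auto.
Qed.

Lemma G_ub N x : Cls N -> c00 x -> N x <= G x.
Proof.
  intros HN [M Hx]. unfold G. apply (sup_ub Cls (fun N => N x) (l1 M x) N); auto.
  intros N' [[_ H] _]. auto.
Qed.

Lemma G_le x B : (forall N, Cls N -> N x <= B) -> G x <= B.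
Proof. intros H. unfold G. apply sup_le; auto. exists (fun _ => 0). apply Cls_zero. Qed.

Lemma G_Bd : Bd G.
Proof.
  split.
  - intros x Hx. apply (G_ub (fun _ => 0)); auto. apply Cls_zero.
  - intros M x Hx. apply G_le. intros N [[_ H] _]. auto.
Qed.

Lemma G_hom : Hom G.
Proof.
  intros a x [M Hx]. unfold G. apply sup_scal with (B := l1 M x).
  exists (fun _ => 0). apply Cls_zero. intros N [[_ H] _]. auto. apply Rabs_pos.
  intros N [_ [H _]]. apply H. exists M; auto.
Qed.

Lemma G_tri : Tri G.
Proof.
  intros x y Hx Hy. apply G_le. intros N HN.
  eapply Rle_trans. apply (proj1 (proj2 (proj2 HN))); auto.
  apply Rplus_le_compat; apply G_ub; auto.
Qed.

Lemma G_unc : one_unconditional G.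
Proof.
  intros eps x Hx Heps. unfold G. apply sup_ext. intros N HN.
  apply (proj1 (proj2 (proj2 (proj2 HN)))); auto.
Qed.

Lemma G_post x : c00 x -> G x <= Phi G x.
Proof.
  intros Hx. apply G_le. intros N HN.
  eapply Rle_trans. apply (proj2 (proj2 (proj2 (proj2 HN)))); auto.
  apply Phi_mono; auto. apply HN. apply G_Bd. intros; apply G_ub; auto.
Qed.

Lemma G_fix x : c00 x -> G x = Phi G x.
Proof.
  intros Hx. apply Rle_antisym. apply G_post; auto.
  apply G_ub; auto.
  pose proof G_Bd as HB.
  split; [|split; [|split; [|split]]].
  - apply Phi_Bd; auto.
  - apply Phi_hom; auto. apply G_hom.
  - apply Phi_tri; auto. apply G_tri.
  - apply Phi_unc. apply G_unc.
  - intros y Hy. apply (Phi_mono G (Phi G) y HB (Phi_Bd G HB)); auto.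
    intros; apply G_post; auto.
Qed.

End Main.

Theorem proposition1p1 (n : nat -> nat) (s : R) :
  (0 < n 0)%nat ->
  (forall k, (n k < n (S k))%nat) ->
  is_series (fun k => / flog (n k)) s ->
  s < 1 / 10 ->
  exists N : (nat -> R) -> R,
    is_norm_c00 N /\ one_unconditional N /\
    forall x, c00 x ->
      exists L : R,
        is_series (fun k => (normk N (n k) x) ^ 2) L /\
        N x = Rmax (c0norm x) (sqrt L).
Proof.
  intros H0 Hinc Hs Hs10.
  assert (Hn1 : forall k, (1 <= n k)%nat).
  { induction k. lia. specialize (Hinc k). lia. }
  assert (Hs1 : s <= 1) by lra.
  exists (G n). split; [|split].
  - split; [|split].
    + intros x Hx HG i. destruct Hx as [M Hx].
      pose proof (c0_ub M x i Hx).
      pose proof (G_fix n s Hn1 Hs Hs1 x (ex_intro _ M Hx)).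
      assert (c0norm x <= Phi n (G n) x) by apply Rmax_l.
      pose proof (Rabs_pos (x i)).
      assert (Rabs (x i) = 0) by lra.
      destruct (Req_dec (x i) 0); auto. exfalso. apply Rabs_no_R0 in H5. lra.
    + apply (G_hom n s Hn1 Hs Hs1).
    + apply (G_tri n s Hn1 Hs Hs1).
  - apply (G_unc n).
  - intros x Hx. exists (Series (fun k => normk (G n) (n k) x ^ 2)). split.
    + apply Series_correct. destruct Hx as [M Hx].
      apply (ser_facts n s Hn1 Hs (G n) M x). apply (G_Bd n s Hn1 Hs Hs1). auto.
    + apply (G_fix n s Hn1 Hs Hs1 x Hx).
Qed.
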